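(* Let $\lambda\in\mathbb{R}^n$ and $k\le n-1$. Then the vector $v\in\mathbb{R}^n$ with $v_i=e^k_{n-1}(\lambda_{\hat i})$ can be computed using $O(kn\log n)$ arithmetic operations.
   Context: $e^k_m(x_1,\dots,x_m)=\sum_{S\subseteq[m],|S|=k}\prod_{i\in S}x_i$ is the elementary symmetric polynomial, and $\lambda_{\hat i}\in\mathbb{R}^{n-1}$ is the vector obtained from $\lambda$ by deleting its $i$-th entry. *)

(* Defs.v *)
From mathcomp Require Import all_boot all_order all_algebra.
From mathcomp Require Import reals.
Set Implicit Arguments. Unset Strict Implicit. Unset Printing Implicit Defensive.
Import Order.TTheory GRing.Theory Num.Theory.
Local Open Scope ring_scope.

Section Defs.
Variable R : realType.

Definition esym (k : nat) (s : seq R) : R :=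
  \sum_(S : {set 'I_(size s)} | #|S| == k) \prod_(i in S) s`_i.

Definition delete_at (i : nat) (s : seq R) : seq R := take i s ++ drop i.+1 s.

(* Straight-line arithmetic programs (algebraic computation model).
   Registers are numbered 0,1,2,... in order of creation; each instruction
   creates one new register.  Loading an input or a real constant is free;
   each +, -, *, / counts as one arithmetic operation. *)
Inductive instr :=
| IInput of nat
| IConst of R
| IAdd of nat & nat
| ISub of nat & nat
| IMul of nat & nat
| IDiv of nat & nat.     (* r_a / r_b  (MathComp's total division, x/0 = 0) *)

Definition step (x : seq R) (regs : seq R) (c : instr) : seq R :=
  let r a := nth 0 regs a in
  rcons regs (match c with
              | IInput j => nth 0 x j
              | IConst v => v
              | IAdd a b => r a + r b
              | ISub a b => r a - r b
              | IMul a b => r a * r b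
              | IDiv a b => r a / r b
              end).

Definition run (p : seq instr) (x : seq R) : seq R := foldl (step x) [::] p.

Definition output (p : seq instr) (outs : seq nat) (x : seq R) : seq R :=
  map (nth 0 (run p x)) outs.

Definition is_arith (c : instr) : bool :=
  match c with IInput _ | IConst _ => false | _ => true end.

Definition arith_cost (p : seq instr) : nat := count is_arith p.

End Defs.

Definition target (R : realType) (k : nat) (lam : seq R) : seq R :=
  [seq esym k (delete_at i lam) | i <- iota 0 (size lam)].

(* Main.v *)
Require Import Defs.
From mathcomp Require Import all_boot all_order all_algebra.
From mathcomp Require Import reals.
From mathcomp Require Import ring zify.
Set Implicit Arguments. Unset Strict Implicit. Unset Printing Implicit Defensive.
Import Order.TTheory GRing.Theory Num.Theory.
Local Open Scope ring_scope.

Fixpoint E (R : realType) (k : nat) (s : seq R) : R :=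
  match k, s with
  | 0%N, _ => 1
  | _.+1, [::] => 0
  | j.+1, x :: t => E j.+1 t + x * E j t
  end.

Lemma E0 (R : realType) (s : seq R) : E 0 s = 1.
Proof. by case: s. Qed.

Definition es (R : realType) (I : finType) (w : I -> R) (k : nat) (A : {set I}) : R :=
  \sum_(S : {set I} | (S \subset A) && (#|S| == k)) \prod_(i in S) w i.

Lemma es0 (R : realType) (I : finType) (w : I -> R) A : es w 0 A = 1.
Proof.
rewrite /es (big_pred1 set0) ?big_set0 // => S /=.
rewrite cards_eq0; case: eqP => [->|]; by rewrite ?sub0set ?andbF.
Qed.

Lemma es_set0 (R : realType) (I : finType) (w : I -> R) k : es w k.+1 set0 = 0.
Proof.
rewrite /es big_pred0 // => S; rewrite subset0; case: eqP => [->|] //=.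
by rewrite cards0.
Qed.

Lemma esU1 (R : realType) (I : finType) (w : I -> R) (a : I) (A : {set I}) k :
  a \notin A -> es w k.+1 (a |: A) = es w k.+1 A + w a * es w k A.
Proof.
move=> aA; rewrite /es (bigID (fun S : {set I} => a \in S)) /= addrC; congr (_ + _).
  apply: eq_bigl => S; apply/idP/idP.
    case/andP=> /andP[sub ->] aS; rewrite andbT; apply/subsetP => x xS.
    have := subsetP sub x xS; rewrite in_setU1 => /orP[/eqP xa|//].
    by move: aS; rewrite -xa xS.
  case/andP=> sub ->; rewrite andbT; apply/andP; split.
    apply: (subset_trans sub); exact: subsetU1.
  by apply/negP => aS; move: aA; rewrite (subsetP sub a aS).
rewrite mulr_sumr.
rewrite (reindex_onto (fun T => a |: T) (fun S => S :\ a)); last first.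
  by move=> S /andP[_ aS]; rewrite setD1K.
apply: eq_big => T.
  apply/idP/idP.
    case/andP=> /andP[/andP[sub c] _] /eqP eT.
    have aT : a \notin T by rewrite -eT setD11.
    rewrite cardsU1 aT add1n eqSS in c; rewrite c andbT.
    apply/subsetP => x xT.
    have := subsetP sub x (setU1r a xT); rewrite in_setU1 => /orP[/eqP xa|//].
    by move: aT; rewrite -xa xT.
  case/andP=> sub c.
  have aT : a \notin T by apply/negP => aT; move: aA; rewrite (subsetP sub a aT).
  rewrite setU1K // eqxx setU11 cardsU1 aT add1n eqSS c !andbT.
  by apply: setUS.
case/andP=> /andP[/andP[_ _] _] /eqP eT.
have aT : a \notin T by rewrite -eT setD11.
by rewrite big_setU1.
Qed.

Lemma E_drop (R : realType) (s : seq R) (d : nat) : (d <= size s)%N -> forall k,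
  E k (drop (size s - d) s) =
  es (fun i : 'I_(size s) => s`_i) k [set i : 'I_(size s) | (size s - d <= i)%N].
Proof.
elim: d => [|d IH] hd k.
  rewrite subn0 drop_size.
  have -> : [set i : 'I_(size s) | (size s <= i)%N] = set0.
    by apply/setP => i; rewrite !inE leqNgt ltn_ord.
  by case: k => [|k]; rewrite ?es0 ?es_set0.
have hm : (size s - d.+1 < size s)%N by rewrite ltn_subrL; apply/andP; split; lia.
rewrite (drop_nth 0 hm).
have e1 : (size s - d.+1).+1 = (size s - d)%N by lia.
rewrite e1.
have -> : [set i : 'I_(size s) | (size s - d.+1 <= i)%N] =
   Ordinal hm |: [set i : 'I_(size s) | (size s - d <= i)%N].
  apply/setP => i; rewrite !inE -val_eqE /=; apply/idP/idP.
    rewrite leq_eqVlt => /orP[/eqP ->|h]; first by rewrite eqxx.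
    by rewrite -e1 h orbT.
  by case/orP=> [/eqP ->//| h]; lia.
case: k => [|k]; first by rewrite !es0.
rewrite esU1; last by rewrite inE /=; lia.
by rewrite /= !IH //; lia.
Qed.

Lemma esym_E (R : realType) k (s : seq R) : Defs.esym k s = E k s.
Proof.
have := E_drop (leqnn (size s)) k; rewrite subnn drop0 => ->.
rewrite /Defs.esym /es; apply: eq_bigl => S.
have -> : [set i : 'I_(size s) | (0 <= i)%N] = setT by apply/setP => i; rewrite !inE.
by rewrite subsetT.
Qed.

Lemma E_del (R : realType) (s : seq R) i j : (i < size s)%N ->
  E j.+1 s = E j.+1 (delete_at i s) + s`_i * E j (delete_at i s).
Proof.
elim: s i j => [|x t IH] [|i] j //= hi.
  by rewrite /delete_at /= drop0.
rewrite /delete_at /= -/(delete_at i t) (IH i j hi).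
case: j => [|j] /=; first by rewrite !E0; ring.
rewrite (IH i j hi); ring.
Qed.

Lemma size_run (R : realType) (x : seq R) regs p :
  size (foldl (step x) regs p) = (size regs + size p)%N.
Proof.
elim: p regs => [|c p IH] regs /=; first by rewrite addn0.
by rewrite IH size_rcons addSnnS.
Qed.

Lemma nth_run (R : realType) (x : seq R) regs p i : (i < size regs)%N ->
  nth 0 (foldl (step x) regs p) i = nth 0 regs i.
Proof.
elim: p regs => [|c p IH] regs //= hi.
rewrite IH ?size_rcons; last by apply: ltnW.
by rewrite nth_rcons hi.
Qed.

Lemma nth_step_last (R : realType) (x : seq R) regs c :
  nth 0 (step x regs c) (size regs) =
  match c with
  | IInput j => nth 0 x j
  | IConst v => v
  | IAdd a b => nth 0 regs a + nth 0 regs b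
  | ISub a b => nth 0 regs a - nth 0 regs b
  | IMul a b => nth 0 regs a * nth 0 regs b
  | IDiv a b => nth 0 regs a / nth 0 regs b
  end.
Proof. by rewrite /step nth_rcons ltnn eqxx. Qed.

Lemma nth_step_old (R : realType) (x : seq R) regs c i : (i < size regs)%N ->
  nth 0 (step x regs c) i = nth 0 regs i.
Proof. by move=> hi; rewrite /step nth_rcons hi. Qed.

Lemma size_step (R : realType) (x : seq R) regs c :
  size (step x regs c) = (size regs).+1.
Proof. by rewrite /step size_rcons. Qed.

Fixpoint updI (R : realType) (l : nat) (cur : seq nat) (base t cnt : nat) : seq (instr R) :=
  match cnt with
  | 0%N => [::]
  | c.+1 => IMul R l (nth 0%N cur t) :: IAdd R (nth 0%N cur t.+1) base
              :: updI R l cur (base + 2) t.+1 c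
  end.

Lemma size_updI R l cur base t cnt : size (updI R l cur base t cnt) = (2 * cnt)%N.
Proof. elim: cnt base t => [|c IH] base t //=; rewrite IH; lia. Qed.

Lemma cost_updI R l cur base t cnt : count (@is_arith R) (updI R l cur base t cnt) = (2 * cnt)%N.
Proof. elim: cnt base t => [|c IH] base t //=; rewrite IH; lia. Qed.

Lemma updI_val (R : realType) (x : seq R) l cur cnt : forall base t regs,
  size regs = base -> (l < base)%N -> (forall u, nth 0%N cur u < base)%N ->
  forall u, (u < cnt)%N ->
  nth 0 (foldl (step x) regs (updI R l cur base t cnt)) (base + 2 * u + 1) =
  nth 0 regs (nth 0%N cur (t + u).+1) + nth 0 regs l * nth 0 regs (nth 0%N cur (t + u)).
Proof.
elim: cnt => [|c IH] base t regs hs hl hc u hu //=.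
set r1 := step x regs _.
set r2 := step x r1 _.
have s1 : size r1 = base.+1 by rewrite size_step hs.
have s2 : size r2 = base.+2 by rewrite size_step s1.
have o2 : forall i, (i < base)%N -> nth 0 r2 i = nth 0 regs i.
  by move=> i hi; rewrite !nth_step_old ?s1 ?hs //; lia.
case: u hu => [|u] hu.
  rewrite nth_run; last by rewrite s2; lia.
  rewrite muln0 addn0 addn1 -s1 nth_step_last /= nth_step_old ?s1 ?hs //.
  rewrite -hs nth_step_last addn0; ring.
have -> : (base + 2 * u.+1 + 1 = (base + 2) + 2 * u + 1)%N by lia.
have h1 : size r2 = (base + 2)%N by rewrite s2 addn2.
have h2 : (l < base + 2)%N by lia.
have h3 : forall v, (nth 0%N cur v < base + 2)%N by move=> v; have := hc v; lia.
have h4 : (u < c)%N by lia.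
rewrite (IH (base + 2)%N t.+1 r2 h1 h2 h3 u h4).
rewrite !o2 ?addSnnS //.
Qed.

Definition newcur (k : nat) (cur : seq nat) (base : nat) : seq nat :=
  nth 0%N cur 0 :: mkseq (fun t => base + 2 * t + 1)%N k.

Fixpoint dpP (R : realType) (k c : nat) (cur : seq nat) (base : nat) : seq (instr R) :=
  match c with
  | 0%N => [::]
  | c'.+1 => updI R c' cur base 0 k ++ dpP R k c' (newcur k cur base) (base + 2 * k)
  end.

Fixpoint dpCur (k c : nat) (cur : seq nat) (base : nat) : seq nat :=
  match c with
  | 0%N => cur
  | c'.+1 => dpCur k c' (newcur k cur base) (base + 2 * k)
  end.

Lemma size_dpP R k c : forall cur base, size (dpP R k c cur base) = (2 * k * c)%N.
Proof. elim: c => [|c IH] cur base /=; first by rewrite muln0. rewrite size_cat size_updI IH; lia. Qed.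

Lemma cost_dpP R k c : forall cur base, count (@is_arith R) (dpP R k c cur base) = (2 * k * c)%N.
Proof. elim: c => [|c IH] cur base /=; first by rewrite muln0. rewrite count_cat cost_updI IH; lia. Qed.

Lemma dp_val (R : realType) (lam : seq R) k c : forall cur regs base,
  size regs = base ->
  (c <= size lam)%N -> (size lam < base)%N ->
  (forall i, (i < size lam)%N -> nth 0 regs i = nth 0 lam i) ->
  (forall j, nth 0%N cur j < base)%N ->
  (forall j, (j <= k)%N -> nth 0 regs (nth 0%N cur j) = E j (drop c lam)) ->
  let regs' := foldl (step lam) regs (dpP R k c cur base) in
  (forall j, nth 0%N (dpCur k c cur base) j < base + 2 * k * c)%N /\
  (forall j, (j <= k)%N -> nth 0 regs' (nth 0%N (dpCur k c cur base) j) = E j lam).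
Proof.
elim: c => [|c IH] cur regs base hs hc hn hin hcur hval /=.
  by split=> // j; rewrite ?muln0 ?addn0 // => hj; rewrite hval // drop0.
rewrite foldl_cat.
set r1 := foldl (step lam) regs _.
have s1 : size r1 = (base + 2 * k)%N by rewrite size_run size_updI hs.
have o1 : forall i, (i < base)%N -> nth 0 r1 i = nth 0 regs i.
  by move=> i hi; rewrite nth_run // hs.
have hcur1 : forall j, (nth 0%N (newcur k cur base) j < base + 2 * k)%N.
  move=> j; case: j => [|j] /=; first by have := hcur 0%N; lia.
  case: (ltnP j k) => hj; first by rewrite nth_mkseq; lia.
  by rewrite nth_default ?size_mkseq; lia.
have hval1 : forall j, (j <= k)%N -> nth 0 r1 (nth 0%N (newcur k cur base) j) = E j (drop c lam).
  move=> [|j] hj /=.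
    by rewrite o1 // hval // !E0.
  rewrite nth_mkseq; last by lia.
  have hc' : (c < size lam)%N by lia.
  rewrite (drop_nth 0 hc') /= -/(drop c.+1 lam).
  rewrite (@updI_val R lam c cur k base 0%N regs hs) //; last by lia.
  rewrite !hval ?add0n //; last by lia.
  rewrite hin //; ring.
have hin1 : forall i, (i < size lam)%N -> nth 0 r1 i = nth 0 lam i.
  by move=> i hi; rewrite o1 ?hin //; lia.
have hc1 : (c <= size lam)%N by lia.
have hn1 : (size lam < base + 2 * k)%N by lia.
have [h1 h2] := IH (newcur k cur base) r1 (base + 2 * k)%N s1 hc1 hn1 hin1 hcur1 hval1.
split=> //.
move=> j.
have -> : (base + 2 * k * c.+1 = base + 2 * k + 2 * k * c)%N by lia.
exact: h1.
Qed.

Fixpoint recI (R : realType) (D : seq nat) (i f base t cnt : nat) : seq (instr R) :=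
  match cnt with
  | 0%N => [::]
  | c.+1 => IMul R i f :: ISub R (nth 0%N D t.+1) base :: recI R D i (base + 1) (base + 2) t.+1 c
  end.

Fixpoint recOut (f base cnt : nat) : nat :=
  match cnt with
  | 0%N => f
  | c.+1 => recOut (base + 1) (base + 2) c
  end.

Lemma size_recI R D i cnt : forall f base t, size (recI R D i f base t cnt) = (2 * cnt)%N.
Proof. elim: cnt => [|c IH] f base t //=; rewrite IH; lia. Qed.

Lemma cost_recI R D i cnt : forall f base t, count (@is_arith R) (recI R D i f base t cnt) = (2 * cnt)%N.
Proof. elim: cnt => [|c IH] f base t //=; rewrite IH; lia. Qed.

Lemma recOut_lt cnt : forall f base, (f < base)%N -> (recOut f base cnt < base + 2 * cnt)%N.
Proof.
elim: cnt => [|c IH] f base hf /=; first by lia.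
have := IH (base + 1)%N (base + 2)%N ltac:(lia); lia.
Qed.

Lemma rec_val (R : realType) (lam : seq R) D i k cnt : forall f base t regs,
  size regs = base -> (f < base)%N -> (i < size lam)%N -> (size lam <= base)%N ->
  (forall i, (i < size lam)%N -> nth 0 regs i = nth 0 lam i) ->
  (forall j, nth 0%N D j < base)%N ->
  (forall u, (u <= k)%N -> nth 0 regs (nth 0%N D u) = E u lam) ->
  (t + cnt <= k)%N ->
  nth 0 regs f = E t (delete_at i lam) ->
  nth 0 (foldl (step lam) regs (recI R D i f base t cnt)) (recOut f base cnt)
    = E (t + cnt) (delete_at i lam).
Proof.
elim: cnt => [|c IH] f base t regs hs hf hi hn hin hD hv htc hft /=.
  by rewrite addn0.
set r1 := step lam regs _.
set r2 := step lam r1 _.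
have s1 : size r1 = base.+1 by rewrite size_step hs.
have s2 : size r2 = (base + 2)%N by rewrite size_step s1 addn2.
have o2 : forall j, (j < base)%N -> nth 0 r2 j = nth 0 regs j.
  by move=> j hj; rewrite !nth_step_old ?s1 ?hs //; lia.
have v2 : nth 0 r2 (base + 1) = E t.+1 (delete_at i lam).
  rewrite addn1 -s1 nth_step_last /= nth_step_old ?s1 ?hs //.
  rewrite -hs nth_step_last hv; last by lia.
  rewrite hin // hft (E_del t hi); ring.
have -> : (t + c.+1 = t.+1 + c)%N by lia.
apply: IH => //.
- by lia.
- by lia.
- by move=> j hj; rewrite o2 ?hin //; lia.
- by move=> j; have := hD j; lia.
- by move=> u hu; rewrite o2 ?hv //.
- by lia.
Qed.

Fixpoint allI (R : realType) (D : seq nat) (one k i cnt base : nat) : seq (instr R) :=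
  match cnt with
  | 0%N => [::]
  | c.+1 => recI R D i one base 0 k ++ allI R D one k i.+1 c (base + 2 * k)
  end.

Lemma cost_allI R D one k cnt : forall i base,
  count (@is_arith R) (allI R D one k i cnt base) = (2 * k * cnt)%N.
Proof.
elim: cnt => [|c IH] i base /=; first by rewrite muln0.
rewrite count_cat cost_recI IH; lia.
Qed.

Lemma all_val (R : realType) (lam : seq R) D one k cnt : forall i base regs,
  size regs = base -> (one < base)%N -> nth 0 regs one = 1 ->
  (i + cnt <= size lam)%N -> (size lam <= base)%N ->
  (forall i, (i < size lam)%N -> nth 0 regs i = nth 0 lam i) ->
  (forall j, nth 0%N D j < base)%N ->
  (forall u, (u <= k)%N -> nth 0 regs (nth 0%N D u) = E u lam) ->
  forall u, (u < cnt)%N ->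
  nth 0 (foldl (step lam) regs (allI R D one k i cnt base)) (recOut one (base + 2 * k * u) k)
    = E k (delete_at (i + u) lam).
Proof.
elim: cnt => [|c IH] i base regs hs ho h1 hic hn hin hD hv u hu //=.
rewrite foldl_cat.
set r1 := foldl (step lam) regs _.
have s1 : size r1 = (base + 2 * k)%N by rewrite size_run size_recI hs.
have o1 : forall j, (j < base)%N -> nth 0 r1 j = nth 0 regs j.
  by move=> j hj; rewrite nth_run // hs.
case: u hu => [|u] hu.
  rewrite muln0 addn0 addn0 nth_run; last first.
    by rewrite s1; apply: recOut_lt.
  rewrite /r1 (@rec_val R lam D i k k one base 0%N regs) //; try lia.
  by rewrite h1 E0.
have -> : (base + 2 * k * u.+1 = (base + 2 * k) + 2 * k * u)%N by lia.
have -> : (i + u.+1 = i.+1 + u)%N by lia.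
apply: IH => //.
- by lia.
- by rewrite o1.
- by lia.
- by lia.
- by move=> j hj; rewrite o1 ?hin //; lia.
- by move=> j; have := hD j; lia.
- by move=> v hv'; rewrite o1 ?hv.
Qed.

Definition cur0 (n k : nat) : seq nat := n :: nseq k n.+1.

Definition prog (R : realType) (n k : nat) : seq (instr R) :=
  mkseq (fun j => IInput R j) n ++ [:: @IConst R 1; @IConst R 0] ++
  dpP R k n (cur0 n k) n.+2 ++
  allI R (dpCur k n (cur0 n k) n.+2) n k 0 n (n.+2 + 2 * k * n).

Definition outs (n k : nat) : seq nat :=
  mkseq (fun i => recOut n (n.+2 + 2 * k * n + 2 * k * i) k) n.

Lemma cost_prog R n k : arith_cost (prog R n k) = (4 * k * n)%N.
Proof.
rewrite /arith_cost /prog !count_cat cost_dpP cost_allI /=.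
have -> : count (@is_arith R) (mkseq (fun j => IInput R j) n) = 0%N.
  by elim: n {k} => // n IH; rewrite mkseqS -cats1 count_cat IH.
lia.
Qed.

Lemma run_inputs (R : realType) (x : seq R) m :
  size (foldl (step x) [::] (mkseq (fun j => IInput R j) m)) = m /\
  forall i, (i < m)%N -> nth 0 (foldl (step x) [::] (mkseq (fun j => IInput R j) m)) i = nth 0 x i.
Proof.
elim: m => [|m [IHs IHv]]; first by split.
rewrite mkseqS -cats1 foldl_cat /=.
split; first by rewrite size_step IHs.
move=> i hi; case: (ltnP i m) => him.
  by rewrite nth_step_old ?IHs // IHv.
have -> : i = m by lia.
by move: (nth_step_last x (foldl (step x) [::] (mkseq (fun j => IInput R j) m)) (IInput R m)); rewrite IHs => ->.
Qed.

Lemma prog_correct (R : realType) k (lam : seq R) :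
  (k <= (size lam).-1)%N ->
  output (prog R (size lam) k) (outs (size lam) k) lam = target k lam.
Proof.
move=> hk; set n := size lam.
have [si vi] := run_inputs lam n.
rewrite /output /run /prog !foldl_cat.
set r0 := foldl (step lam) [::] _.
set r1 := foldl (step lam) r0 _.
have s0 : size r0 = n by [].
have v0 : forall i, (i < n)%N -> nth 0 r0 i = nth 0 lam i by [].
have s1 : size r1 = n.+2 by rewrite size_run s0 addn2.
have v1a : nth 0 r1 n = 1.
  rewrite /r1 /= nth_step_old ?size_step ?s0 //.
  by move: (nth_step_last lam r0 (@IConst R 1)); rewrite s0 => ->.
have v1b : nth 0 r1 n.+1 = 0.
  rewrite /r1 /=.
  by move: (nth_step_last lam (step lam r0 (@IConst R 1)) (@IConst R 0)); rewrite size_step s0 => ->.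
have v1i : forall i, (i < n)%N -> nth 0 r1 i = nth 0 lam i.
  by move=> i hi; rewrite nth_run ?s0 // v0.
have [hD1 hD2] := @dp_val R lam k n (cur0 n k) r1 n.+2 s1 (leqnn _) ltac:(lia) v1i
  ltac:(move=> j; rewrite /cur0; case: j => [|j] /=; [lia|];
        case: (ltnP j k) => hj; [rewrite nth_nseq hj; lia | rewrite nth_default ?size_nseq; lia])
  ltac:(move=> j hj; rewrite drop_oversize // /cur0; case: j hj => [|j] hj /=;
        [by rewrite v1a | by rewrite nth_nseq hj v1b]).
set r2 := foldl (step lam) r1 _.
set D := dpCur k n (cur0 n k) n.+2.
have s2 : size r2 = (n.+2 + 2 * k * n)%N by rewrite size_run size_dpP s1.
have o2 : forall j, (j < n.+2)%N -> nth 0 r2 j = nth 0 r1 j.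
  by move=> j hj; rewrite nth_run // s1.
rewrite /target -/n /outs /mkseq -map_comp; apply/eq_in_map => i; rewrite mem_iota add0n => /andP[_ hi] /=.
rewrite (@all_val R lam D n k n 0%N (n.+2 + 2 * k * n)%N r2) //.
- by rewrite add0n esym_E.
- by lia.
- by rewrite o2 // v1a.
- by rewrite -/n; lia.
- by move=> j hj; rewrite o2 ?v1i //; lia.
Qed.

Unset Implicit Arguments.
Theorem mainTheorem15 (R : realType) :
  exists C N : nat, forall n k : nat, (N <= n)%N -> (k <= n.-1)%N ->
    exists (p : seq (instr R)) (outs : seq nat),
      (arith_cost p <= C * k * n * up_log 2 n)%N /\
      forall lam : seq R, size lam = n -> output p outs lam = target k lam.
Proof.
exists 4%N, 2%N => n k hn hk.
exists (prog R n k), (outs n k); split.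
  rewrite cost_prog; apply: leq_pmulr.
  by rewrite up_log_gt0; lia.
by move=> lam hl; rewrite -hl prog_correct // hl.
Qed.
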